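(* Let $(W,S)$ be a Coxeter system, $w\in W\setminus\{1\}$, and $k\in I$ with $k\notin D_R(w)$. Let $W_{I\setminus\{k\}}=\langle s_i : i\in I\setminus\{k\}\rangle$. Then $$\mathrm{Annex}(ws_k)\subseteq \mathrm{Annex}(w)\cdot W_{I\setminus\{k\}}=\{xy: x\in\mathrm{Annex}(w),\ y\in W_{I\setminus\{k\}}\}.$$
   Context: $(W,S)$ a Coxeter system with $S=\{s_i:i\in I\}$; $\ell$ the length; $\le$ the Bruhat order. The right descent set is $D_R(w)=\{i\in I:\ell(ws_i)<\ell(w)\}$. $\mathrm{Annex}(w)=\{y\in W: w\not\le y\}$. *)

(* Defs.v *)
From Stdlib Require Import List Relations.
Import ListNotations.

Record Group := {
  gcar :> Type;
  gmul : gcar -> gcar -> gcar;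
  gone : gcar;
  ginv : gcar -> gcar;
  gmulA : forall x y z, gmul x (gmul y z) = gmul (gmul x y) z;
  gmul1 : forall x, gmul gone x = x;
  gmulV : forall x, gmul (ginv x) x = gone
}.

Arguments gmul {g}.
Arguments gone {g}.
Arguments ginv {g}.

Fixpoint gpow (G : Group) (x : G) (n : nat) : G :=
  match n with O => gone | S n => gmul x (gpow G x n) end.

Fixpoint eval_word {I : Type} (G : Group) (s : I -> G) (l : list (bool * I)) : G :=
  match l with
  | [] => gone
  | (b, i) :: l' => gmul (if b then ginv (s i) else s i) (eval_word G s l')
  end.

Definition in_gen_subgroup {I : Type} (G : Group) (s : I -> G) (J : I -> Prop) (y : G) : Prop :=
  exists l : list (bool * I), Forall (fun p => J (snd p)) l /\ eval_word G s l = y.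

(* Coxeter matrix, with m i j = 0 encoding m_ij = infinity. *)
Definition coxeter_matrix {I : Type} (m : I -> I -> nat) : Prop :=
  (forall i, m i i = 1) /\ (forall i j, m i j = m j i) /\
  (forall i j, i <> j -> m i j <> 1).

Definition satisfies_relations {I : Type} (G : Group) (f : I -> G) (m : I -> I -> nat) : Prop :=
  forall i j, m i j <> 0 -> gpow G (gmul (f i) (f j)) (m i j) = gone.

Definition coxeter_system {I : Type} (W : Group) (s : I -> W) : Prop :=
  exists m : I -> I -> nat,
    coxeter_matrix m /\
    satisfies_relations W s m /\
    (forall w : W, in_gen_subgroup W s (fun _ => True) w) /\
    (forall (G : Group) (f : I -> G), satisfies_relations G f m ->
       exists phi : W -> G,
         (forall x y, phi (gmul x y) = gmul (phi x) (phi y)) /\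
         (forall i, phi (s i) = f i)).

Fixpoint prod_word {I : Type} (G : Group) (s : I -> G) (l : list I) : G :=
  match l with [] => gone | i :: l' => gmul (s i) (prod_word G s l') end.

Definition has_word_of_length {I : Type} (W : Group) (s : I -> W) (w : W) (n : nat) : Prop :=
  exists l : list I, length l = n /\ prod_word W s l = w.

Definition len_lt {I : Type} (W : Group) (s : I -> W) (x y : W) : Prop :=
  exists n, has_word_of_length W s x n /\
    forall n', has_word_of_length W s y n' -> n < n'.

Definition in_right_descent {I : Type} (W : Group) (s : I -> W) (w : W) (k : I) : Prop :=
  len_lt W s (gmul w (s k)) w.

Definition reflection {I : Type} (W : Group) (s : I -> W) (t : W) : Prop :=
  exists (x : W) (i : I), t = gmul x (gmul (s i) (ginv x)).

Definition bruhat_step {I : Type} (W : Group) (s : I -> W) (u v : W) : Prop :=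
  exists t, reflection W s t /\ v = gmul u t /\ len_lt W s u v.

Definition bruhat_le {I : Type} (W : Group) (s : I -> W) : W -> W -> Prop :=
  clos_refl_trans W (bruhat_step W s).

Definition Annex {I : Type} (W : Group) (s : I -> W) (w : W) : W -> Prop :=
  fun y => ~ bruhat_le W s w y.

(* Main.v *)
Require Import Defs.
From Stdlib Require Import List Relations Lia Arith PeanoNat Bool Classical ClassicalEpsilon FunctionalExtensionality.
Import ListNotations.

Section GroupLemmas.
Variable G : Group.

Lemma gmulV' (x : G) : gmul x (ginv x) = gone.
Proof.
  rewrite <- (gmul1 G (gmul x (ginv x))).
  rewrite <- (gmulV G (ginv x)) at 1.
  rewrite <- gmulA. rewrite (gmulA G (ginv x) x (ginv x)). rewrite gmulV, gmul1. apply gmulV.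
Qed.

Lemma gmul1' (x : G) : gmul x gone = x.
Proof. rewrite <- (gmulV G x), gmulA, gmulV', gmul1. reflexivity. Qed.

Lemma inv_uniq (x y : G) : gmul x y = gone -> ginv x = y.
Proof.
  intro H. rewrite <- (gmul1' (ginv x)), <- H, gmulA, gmulV, gmul1. reflexivity.
Qed.

Lemma inv_inv (x : G) : ginv (ginv x) = x.
Proof. apply inv_uniq. apply gmulV. Qed.

Lemma inv_mul (x y : G) : ginv (gmul x y) = gmul (ginv y) (ginv x).
Proof.
  apply inv_uniq. rewrite <- gmulA, (gmulA G y), gmulV', gmul1. apply gmulV'.
Qed.

Lemma inv_one : ginv (@gone G) = gone.
Proof. apply inv_uniq. apply gmul1. Qed.

Lemma mul_cancel_l (a x y : G) : gmul a x = gmul a y -> x = y.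
Proof.
  intro H. rewrite <- (gmul1 G x), <- (gmul1 G y), <- (gmulV G a), <- !gmulA, H. reflexivity.
Qed.

Lemma mul_cancel_r (a x y : G) : gmul x a = gmul y a -> x = y.
Proof.
  intro H. rewrite <- (gmul1' x), <- (gmul1' y), <- (gmulV' a), !gmulA, H. reflexivity.
Qed.

Definition cj (h y : G) : G := gmul h (gmul y (ginv h)).

Lemma cj_mul (a b y : G) : cj (gmul a b) y = cj a (cj b y).
Proof. unfold cj. rewrite inv_mul, !gmulA. reflexivity. Qed.

Lemma cj_one (y : G) : cj gone y = y.
Proof. unfold cj. rewrite inv_one, gmul1, gmul1'. reflexivity. Qed.

Lemma cj_inv (h y : G) : cj (ginv h) (cj h y) = y.
Proof. rewrite <- cj_mul, gmulV, cj_one. reflexivity. Qed.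

Lemma cj_inv' (h y : G) : cj h (cj (ginv h) y) = y.
Proof. rewrite <- cj_mul, gmulV', cj_one. reflexivity. Qed.

Lemma cj_eq (h y a : G) : cj h y = a <-> y = cj (ginv h) a.
Proof.
  split; intro H; subst. rewrite cj_inv; auto. rewrite cj_inv'; auto.
Qed.

End GroupLemmas.

Lemma hom_one (G H : Group) (f : G -> H) : (forall x y, f (gmul x y) = gmul (f x) (f y)) -> f gone = gone.
Proof.
  intro Hf. apply (mul_cancel_l H (f gone)). rewrite <- Hf, gmul1, gmul1'. reflexivity.
Qed.

Lemma hom_inv (G H : Group) (f : G -> H) : (forall x y, f (gmul x y) = gmul (f x) (f y)) -> forall x, f (ginv x) = ginv (f x).
Proof.
  intros Hf x. symmetry. apply inv_uniq. rewrite <- Hf, gmulV'. apply hom_one; auto.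
Qed.



Section SD.
Variable W : Group.

Definition eqbW (x y : W) : bool := if excluded_middle_informative (x = y) then true else false.
Lemma eqbW_true (x y : W) : eqbW x y = true <-> x = y.
Proof. unfold eqbW. destruct (excluded_middle_informative (x = y)); split; congruence. Qed.
Lemma eqbW_iff (x y a b : W) : (x = y <-> a = b) -> eqbW x y = eqbW a b.
Proof.
  intro H. unfold eqbW. destruct (excluded_middle_informative (x = y)), (excluded_middle_informative (a = b)); tauto.
Qed.

Definition SDcar := (W * (W -> bool))%type.
Definition sdmul (p q : SDcar) : SDcar :=
  (gmul (fst p) (fst q), fun y => xorb (snd q y) (snd p (cj W (fst q) y))).
Definition sdone : SDcar := (gone, fun _ => false).
Definition sdinv (p : SDcar) : SDcar := (ginv (fst p), fun z => snd p (cj W (ginv (fst p)) z)).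

Lemma sdmulA : forall x y z, sdmul x (sdmul y z) = sdmul (sdmul x y) z.
Proof.
  intros [a A] [b B] [c C]. unfold sdmul; simpl. f_equal. apply gmulA.
  apply functional_extensionality; intro y. rewrite cj_mul, xorb_assoc. reflexivity.
Qed.
Lemma sdmul1 : forall x, sdmul sdone x = x.
Proof.
  intros [a A]. unfold sdmul; simpl. f_equal. apply gmul1.
  apply functional_extensionality; intro y. apply xorb_false_r.
Qed.
Lemma sdmulV : forall x, sdmul (sdinv x) x = sdone.
Proof.
  intros [a A]. unfold sdmul, sdinv, sdone; simpl. f_equal. apply gmulV.
  apply functional_extensionality; intro y. rewrite cj_inv. apply xorb_nilpotent.
Qed.

Definition SD : Group := {| gcar := SDcar; gmul := sdmul; gone := sdone; ginv := sdinv;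
  gmulA := sdmulA; gmul1 := sdmul1; gmulV := sdmulV |}.

Fixpoint xs (f : nat -> bool) (n : nat) : bool :=
  match n with O => false | S n => xorb (xs f n) (f n) end.

Lemma xs_ext f g n : (forall p, p < n -> f p = g p) -> xs f n = xs g n.
Proof. induction n; simpl; intros; auto. rewrite IHn, H; auto. Qed.

Lemma xs_add f a b : xs f (a + b) = xorb (xs f a) (xs (fun p => f (a + p)) b).
Proof.
  induction b; simpl. rewrite Nat.add_0_r, xorb_false_r; auto.
  rewrite Nat.add_succ_r; simpl. rewrite IHb, xorb_assoc. reflexivity.
Qed.

Lemma xs_double g n : xs (fun q => xorb (g (2*q)) (g (2*q+1))) n = xs g (2*n).
Proof.
  induction n. reflexivity.
  replace (2 * S n) with (S (S (2*n))) by lia.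
  change (xorb (xs (fun q => xorb (g (2*q)) (g (2*q+1))) n) (xorb (g (2*n)) (g (2*n+1))) = xorb (xorb (xs g (2*n)) (g (2*n))) (g (S (2*n)))).
  rewrite IHn.
  replace (2*n+1) with (S (2*n)) by lia. rewrite xorb_assoc. reflexivity.
Qed.

Lemma gpow_add (r : W) a b : gpow W r (a + b) = gmul (gpow W r a) (gpow W r b).
Proof. induction a; simpl. rewrite gmul1; auto. rewrite IHa, gmulA; auto. Qed.

Lemma gpow_comm (r : W) n : gmul r (gpow W r n) = gmul (gpow W r n) r.
Proof.
  replace (gmul r (gpow W r n)) with (gpow W r (1 + n)) by (simpl; auto).
  rewrite Nat.add_comm, gpow_add. simpl. rewrite gmul1'. auto.
Qed.

Lemma gpow_inv (r : W) n : ginv (gpow W r n) = gpow W (ginv r) n.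
Proof.
  induction n; simpl. apply inv_one.
  rewrite inv_mul, IHn. rewrite <- gpow_comm. reflexivity.
Qed.

Lemma gpow_one n : gpow W gone n = gone.
Proof. induction n; simpl; auto. rewrite IHn; apply gmul1. Qed.

End SD.


Section Rel.
Variable I : Type.
Variable W : Group.
Variable s : I -> W.
Hypothesis Hss : forall i, gmul (s i) (s i) = gone.

Lemma inv_s i : ginv (s i) = s i.
Proof. apply inv_uniq; auto. Qed.

Definition sig (i : I) : SD W := (s i, fun y => eqbW W y (s i)).

Lemma gpow_SD (p : SD W) n : gpow (SD W) p n =
  (gpow W (fst p) n, fun y => xs (fun q => snd p (cj W (gpow W (fst p) q) y)) n).
Proof.
  induction n. reflexivity.
  simpl gpow. rewrite IHn. reflexivity.
Qed.

Lemma rel_SD i j n : gpow W (gmul (s i) (s j)) n = gone ->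
  gpow (SD W) (gmul (sig i) (sig j)) n = gone.
Proof.
  intro Hr. set (r := gmul (s i) (s j)) in *. set (rho := gmul (s j) (s i)).
  assert (Hrho : ginv r = rho) by (unfold r, rho; rewrite inv_mul, !inv_s; auto).
  assert (K : forall q, gmul (s j) (gpow W r q) = gmul (gpow W rho q) (s j)).
  { induction q; simpl. rewrite gmul1, gmul1'; auto.
    rewrite gmulA. replace (gmul (s j) r) with (gmul rho (s j)).
    rewrite <- gmulA, IHq, gmulA. auto.
    unfold r, rho. rewrite <- !gmulA; auto. }
  assert (E1 : forall q, cj W (ginv (gpow W r q)) (s j) = gmul (gpow W rho (2*q)) (s j)).
  { intro q. unfold cj. rewrite inv_inv, K, gpow_inv, Hrho, gmulA.
    f_equal. rewrite <- gpow_add. f_equal. lia. }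
  assert (E2 : forall q, cj W (ginv (gmul (s j) (gpow W r q))) (s i) = gmul (gpow W rho (2*q+1)) (s j)).
  assert (Hrho' : ginv rho = r) by (rewrite <- Hrho; apply inv_inv).
  { intro q. unfold cj. rewrite inv_inv, K, inv_mul, inv_s, gpow_inv, Hrho', K.
    rewrite !gmulA. f_equal. rewrite <- (gmulA _ _ (s j) (s i)). fold rho.
    rewrite <- gpow_comm.
    change (gmul rho (gpow W rho q)) with (gpow W rho (S q)).
    rewrite <- gpow_add. f_equal. lia. }
  simpl gmul. unfold sdmul. rewrite gpow_SD. simpl. unfold sig. simpl.
  fold r. rewrite Hr. unfold sdone. f_equal.
  apply functional_extensionality; intro y.
  set (g := fun p => eqbW W y (gmul (gpow W rho p) (s j))).
  rewrite (xs_ext _ (fun q => xorb (g (2*q)) (g (2*q+1)))).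
  - rewrite xs_double. replace (2*n) with (n+n) by lia. rewrite xs_add.
    rewrite (xs_ext (fun p => g (n + p)) g). apply xorb_nilpotent.
    intros p _. unfold g. rewrite gpow_add, <- Hrho, <- gpow_inv, Hr, inv_one, gmul1. auto.
  - intros q _. unfold g. f_equal.
    + apply eqbW_iff. rewrite <- E1. apply cj_eq.
    + apply eqbW_iff. rewrite <- E2, <- cj_mul. apply cj_eq.
Qed.

End Rel.


Lemma cox_ss (I : Type) (W : Group) (s : I -> W) : coxeter_system W s -> forall i, gmul (s i) (s i) = gone.
Proof.
  intros [m [Hcm [Hrel _]]] i. destruct Hcm as [Hm1 _].
  specialize (Hrel i i). rewrite Hm1 in Hrel. simpl in Hrel. rewrite gmul1' in Hrel. apply Hrel. lia.
Qed.

Lemma exists_N (I : Type) (W : Group) (s : I -> W) : coxeter_system W s ->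
  exists N : W -> W -> bool,
    (forall x y t, N (gmul x y) t = xorb (N y t) (N x (cj W y t))) /\
    (forall i t, N (s i) t = eqbW W t (s i)).
Proof.
  intro HW. pose proof (cox_ss I W s HW) as Hss.
  destruct HW as [m [Hcm [Hrel [Hgen Huniv]]]].
  destruct (Huniv (SD W) (sig I W s)) as [phi [Hphi Hphis]].
  { intros i j Hij. apply rel_SD; auto. }
  assert (Hfst : forall x, fst (phi x) = x).
  { intro x. destruct (Hgen x) as [l [_ Hl]]. subst x. induction l as [|[b i] l IH]; simpl.
    - rewrite (hom_one W (SD W) phi Hphi). reflexivity.
    - rewrite Hphi. simpl. rewrite IH. f_equal. destruct b.
      + rewrite (hom_inv W (SD W) phi Hphi), Hphis. reflexivity.
      + rewrite Hphis. reflexivity. }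
  exists (fun x => snd (phi x)). split.
  - intros x y t. rewrite Hphi. simpl. rewrite Hfst. reflexivity.
  - intros i t. rewrite Hphis. reflexivity.
Qed.


Lemma min_nat (P : nat -> Prop) : (exists n, P n) -> exists n, P n /\ forall m, P m -> n <= m.
Proof.
  intros [n Hn]. induction n as [n IH] using (well_founded_ind lt_wf).
  destruct (classic (exists m, P m /\ m < n)) as [[m [Hm Hlt]]|Hno].
  - apply (IH m Hlt Hm).
  - exists n. split; auto. intros m Hm. destruct (le_lt_dec n m); auto.
    exfalso; apply Hno; eauto.
Qed.

Section Comb.
Variable I : Type.
Variable W : Group.
Variable s : I -> W.
Hypothesis Hss : forall i, gmul (s i) (s i) = gone.
Hypothesis Hgen : forall w, in_gen_subgroup W s (fun _ => True) w.
Variable N : W -> W -> bool.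
Hypothesis HN1 : forall x y t, N (gmul x y) t = xorb (N y t) (N x (cj W y t)).
Hypothesis HN2 : forall i t, N (s i) t = eqbW W t (s i).

Lemma inv_s' i : ginv (s i) = s i.
Proof. apply inv_uniq; auto. Qed.

Lemma N_one t : N gone t = false.
Proof.
  pose proof (HN1 gone gone t) as H. rewrite gmul1, cj_one in H.
  destruct (N gone t); simpl in H; congruence.
Qed.

Lemma prod_app l1 l2 : prod_word W s (l1 ++ l2) = gmul (prod_word W s l1) (prod_word W s l2).
Proof. induction l1; simpl. rewrite gmul1; auto. rewrite IHl1, gmulA; auto. Qed.

Lemma word_split l t : N (prod_word W s l) t = true ->
  exists l', S (length l') = length l /\ prod_word W s l' = gmul (prod_word W s l) t.
Proof.
  induction l as [|i l IH]; simpl; intro H.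
  - rewrite N_one in H; discriminate.
  - rewrite HN1, HN2 in H. destruct (N (prod_word W s l) t) eqn:E.
    + destruct (IH eq_refl) as [l' [Hl Hp]]. exists (i :: l'). simpl. split. lia.
      rewrite Hp, gmulA. auto.
    + simpl in H. apply eqbW_true in H. exists l. split; auto.
      set (p := prod_word W s l) in *. unfold cj in H.
      assert (Hpt : gmul p t = gmul (s i) p).
      { rewrite <- H, <- !gmulA, gmulV, gmul1'. auto. }
      rewrite <- gmulA, Hpt, gmulA, Hss, gmul1. auto.
Qed.

Lemma has_word x : exists n, has_word_of_length W s x n.
Proof.
  destruct (Hgen x) as [l [_ Hl]]. subst x. exists (length l), (map snd l). split.
  apply length_map. induction l as [|[b i] l IH]; simpl; auto. rewrite IH.
  destruct b; auto. rewrite inv_s'; auto.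
Qed.

Lemma min_word x : exists l, prod_word W s l = x /\ forall n, has_word_of_length W s x n -> length l <= n.
Proof.
  destruct (min_nat _ (has_word x)) as [n [[l [Hl Hp]] Hmin]].
  exists l. split; auto. rewrite Hl; auto.
Qed.

Lemma L1 x t : N x t = true -> len_lt W s (gmul x t) x.
Proof.
  intro H. destruct (min_word x) as [l [Hp Hmin]]. subst x.
  destruct (word_split l t H) as [l' [Hl Hp']].
  exists (length l'). split. exists l'; auto.
  intros n' Hn'. specialize (Hmin n' Hn'). lia.
Qed.

Lemma len_lt_asym x y : len_lt W s x y -> len_lt W s y x -> False.
Proof.
  intros [n [Hn Hx]] [m [Hm Hy]]. specialize (Hx m Hm). specialize (Hy n Hn). lia.
Qed.

Lemma refl_tt t : reflection W s t -> gmul t t = gone.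
Proof.
  intros [x [i ->]]. rewrite <- !gmulA, (gmulA _ (ginv x)), gmulV, gmul1, (gmulA _ (s i)), Hss, gmul1, gmulV'. auto.
Qed.

Lemma N_tt t : reflection W s t -> N t t = true.
Proof.
  intros [x [i Ht]].
  assert (E : cj W (ginv x) t = s i) by (rewrite Ht; apply cj_inv).
  assert (E0 : N (ginv x) t = N x (s i)).
  { pose proof (HN1 x (ginv x) t) as H0. rewrite gmulV', N_one, E in H0.
    destruct (N (ginv x) t), (N x (s i)); simpl in *; congruence. }
  rewrite Ht at 1. rewrite HN1, HN1, HN2, E0.
  rewrite cj_mul, E.
  assert (Es : cj W (s i) (s i) = s i) by (unfold cj; rewrite inv_s', Hss, gmul1'; auto).
  rewrite Es. rewrite (proj2 (eqbW_true W _ _) (eq_refl (s i))).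
  destruct (N x (s i)); auto.
Qed.

Lemma L2 x t : reflection W s t -> N x t = false -> len_lt W s x (gmul x t).
Proof.
  intros Ht H.
  assert (Hc : cj W t t = t) by (unfold cj; rewrite (inv_uniq W t t (refl_tt t Ht)), (refl_tt t Ht), gmul1'; auto).
  assert (H1 : N (gmul x t) t = true) by (rewrite HN1, Hc, H, N_tt; auto).
  pose proof (L1 _ _ H1) as H2. rewrite <- gmulA, refl_tt, gmul1' in H2; auto.
Qed.

Lemma refl_s i : reflection W s (s i).
Proof. exists gone, i. rewrite inv_one, gmul1', gmul1. auto. Qed.

Lemma refl_conj i t : reflection W s t -> reflection W s (cj W (s i) t).
Proof. intros [x [j ->]]. exists (gmul (s i) x), j. change (cj W (s i) (cj W x (s j)) = cj W (gmul (s i) x) (s j)). rewrite cj_mul. auto. Qed.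

Lemma stepB u t i : reflection W s t -> t <> s i -> len_lt W s u (gmul u t) ->
  bruhat_step W s (gmul u (s i)) (gmul (gmul u t) (s i)).
Proof.
  intros Ht Hne Hl. exists (cj W (s i) t). split; [apply refl_conj; auto|].
  assert (Hu : N u t = false).
  { destruct (N u t) eqn:E; auto. exfalso. apply (len_lt_asym _ _ Hl (L1 _ _ E)). }
  assert (Eq : gmul (gmul u (s i)) (cj W (s i) t) = gmul (gmul u t) (s i)).
  { unfold cj. rewrite inv_s', <- !gmulA, (gmulA _ (s i) (s i)), Hss, gmul1. auto. }
  split; [auto|]. rewrite <- Eq. apply L2. apply refl_conj; auto.
  rewrite HN1, HN2.
  assert (Ec : cj W (s i) (cj W (s i) t) = t) by (rewrite <- cj_mul, Hss, cj_one; auto).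
  rewrite Ec, Hu.
  destruct (eqbW W (cj W (s i) t) (s i)) eqn:E; auto.
  apply eqbW_true in E. exfalso. apply Hne.
  rewrite <- Ec, E. unfold cj. rewrite inv_s', Hss, gmul1'. auto.
Qed.

Lemma Qlem w x i : bruhat_le W s w x ->
  bruhat_le W s (gmul w (s i)) x \/ bruhat_le W s (gmul w (s i)) (gmul x (s i)).
Proof.
  intro H. apply clos_rt_rtn1_iff in H. induction H as [|u x' Hstep Hc IH].
  - right. apply rt_refl.
  - destruct Hstep as [t [Ht [-> Hl]]]. destruct IH as [IH|IH].
    + left. eapply rt_trans; [apply IH|]. apply rt_step. exists t; auto.
    + destruct (classic (t = s i)) as [->|Hne].
      * left; auto.
      * right. eapply rt_trans; [apply IH|]. apply rt_step. apply stepB; auto.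
Qed.

Lemma lifting w x i : bruhat_le W s w x -> len_lt W s (gmul x (s i)) x ->
  bruhat_le W s (gmul w (s i)) x.
Proof.
  intros H Hl. destruct (Qlem w x i H) as [H1|H1]; auto.
  eapply rt_trans; [apply H1|]. apply rt_step. exists (s i). split. apply refl_s.
  rewrite <- gmulA, Hss, gmul1'. auto.
Qed.

Lemma le_one w : bruhat_le W s w gone -> w = gone.
Proof.
  intro H. apply clos_rt_rtn1_iff in H. inversion H as [|u y Hstep Hc]; auto.
  destruct Hstep as [t [_ [_ [n [_ Hn]]]]]. exfalso.
  assert (n < 0) by (apply Hn; exists []; auto). lia.
Qed.

End Comb.


Theorem proposition3p13 (I : Type) (W : Group) (s : I -> W)
  (HW : coxeter_system W s) (w : W) (k : I)
  (Hw1 : w <> gone) (Hk : ~ in_right_descent W s w k) :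
  forall z : W, Annex W s (gmul w (s k)) z ->
    exists x y : W, Annex W s w x /\ in_gen_subgroup W s (fun i => i <> k) y /\
      z = gmul x y.
Proof.
  intros z Hz.
  pose proof (cox_ss I W s HW) as Hss.
  assert (Hgen : forall w, in_gen_subgroup W s (fun _ => True) w)
    by (destruct HW as [m [_ [_ [Hg _]]]]; exact Hg).
  destruct (exists_N I W s HW) as [N [HN1 HN2]].
  set (J := fun i : I => i <> k).
  set (S := fun x => bruhat_le W s x z /\ in_gen_subgroup W s J (gmul (ginv x) z)).
  destruct (min_nat (fun n => exists x, S x /\ has_word_of_length W s x n)) as [n [[x [HSx Hxn]] Hmin]].
  { destruct (has_word I W s Hss Hgen z) as [n Hn]. exists n, z. split; auto.
    split. apply rt_refl. exists []. split. constructor. simpl. symmetry; apply gmulV. }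
  destruct (classic (bruhat_le W s w x)) as [Hwx|Hwx].
  2:{ exists x, (gmul (ginv x) z). split; auto. split. apply HSx.
      rewrite gmulA, gmulV', gmul1. auto. }
  exfalso. destruct Hxn as [l [Hl Hpl]].
  destruct l as [|i0 l0'] eqn:El.
  { simpl in Hpl. subst x. apply Hw1. apply (le_one I W s w Hwx). }
  destruct (exists_last (l := l) ltac:(rewrite El; discriminate)) as [l0 [i Hl0]].
  rewrite <- El in Hl, Hpl. clear El i0 l0'. subst l.
  rewrite prod_app in Hpl. simpl in Hpl. rewrite gmul1' in Hpl.
  assert (Hxs : gmul x (s i) = prod_word W s l0) by (rewrite <- Hpl, <- gmulA, Hss, gmul1'; auto).
  rewrite length_app in Hl. simpl in Hl.
  assert (Hlt : len_lt W s (gmul x (s i)) x).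
  { exists (length l0). split. exists l0; auto.
    intros n' Hn'. assert (n <= n') by (apply Hmin; exists x; auto). lia. }
  destruct (classic (i = k)) as [->|Hik].
  - apply Hz. eapply rt_trans. apply (lifting I W s Hss Hgen N HN1 HN2 w x k Hwx Hlt). apply HSx.
  - assert (HS' : S (gmul x (s i))).
    { split.
      - eapply rt_trans; [|apply HSx]. apply rt_step. exists (s i). split. apply refl_s.
        split; auto. rewrite <- gmulA, Hss, gmul1'. auto.
      - destruct HSx as [_ [l' [Hf He]]]. exists ((false, i) :: l'). split.
        constructor; auto. simpl. rewrite He, inv_mul, (inv_s' I W s Hss), gmulA. auto. }
    assert (n <= length l0) by (apply Hmin; exists (gmul x (s i)); split; auto; exists l0; auto).
    lia.
Qed.
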